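(* Let $f:\mathbb{R}_{++}\to\mathbb{R}$ be operator convex, i.e. for all $n\in\mathbb{N}$, all positive definite Hermitian $X,Y\in\mathbb{H}^n_{++}$ and all $\lambda\in[0,1]$, $f(\lambda X+(1-\lambda)Y)\preceq\lambda f(X)+(1-\lambda)f(Y)$. Then for any positive semidefinite $A\in\mathbb{H}^n$, the function $g(X)=\operatorname{tr}[Af(X)]$ is $\lambda_{\max}(A)$-smooth and $\lambda_{\min}(A)$-strongly convex relative to $X\mapsto\operatorname{tr}[f(X)]$ on $\mathbb{H}^n_{++}$.
   Context: For Hermitian $X=\sum_i\lambda_iv_iv_i^\dagger$, $f(X)=\sum_if(\lambda_i)v_iv_i^\dagger$. $\preceq$ is the semidefinite (Loewner) order; $\lambda_{\max},\lambda_{\min}$ are largest/smallest eigenvalues. A function $g$ is $L$-smooth relative to $\varphi$ on a set $\mathcal{C}$ if $L\varphi-g$ is convex on the relative interior of $\mathcal{C}$, and $\mu$-strongly convex relative to $\varphi$ if $g-\mu\varphi$ is convex there. *)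

(* Defs.v *)
From HB Require Import structures.
From mathcomp Require Import all_boot all_order all_algebra.
From mathcomp Require Import sesquilinear spectral.
From mathcomp Require Import reals.
From mathcomp.real_closed Require Import complex.
Set Implicit Arguments. Unset Strict Implicit. Unset Printing Implicit Defensive.
Import Order.TTheory GRing.Theory Num.Theory Num.Def.
Local Open Scope ring_scope.
Local Open Scope complex_scope.

Definition ctr (R : realType) m n (M : 'M[R[i]]_(m, n)) : 'M[R[i]]_(n, m) :=
  map_mx conjC (M^T).

Definition hermitian (R : realType) n (X : 'M[R[i]]_n) : Prop :=
  X \is hermsymmx.

Definition psdmx (R : realType) n (X : 'M[R[i]]_n) : Prop :=
  hermitian X /\ forall v : 'rV[R[i]]_n, 0 <= (v *m X *m ctr v) 0 0.

Definition pdmx (R : realType) n (X : 'M[R[i]]_n) : Prop :=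
  hermitian X /\ forall v : 'rV[R[i]]_n, v != 0 -> 0 < (v *m X *m ctr v) 0 0.

Definition loewner_le (R : realType) n (X Y : 'M[R[i]]_n) : Prop :=
  psdmx (Y - X).

(* Real eigenvalues of a Hermitian matrix, read off a spectral decomposition
   X = P^{-1} diag(d) P with P unitary (spectral.v). *)
Definition eigval (R : realType) n (X : 'M[R[i]]_n) (j : 'I_n) : R :=
  complex.Re (spectral_diag X 0 j).

Definition mxfun (R : realType) (f : R -> R) n (X : 'M[R[i]]_n) : 'M[R[i]]_n :=
  invmx (spectralmx X) *m
    diag_mx (\row_j (f (eigval X j))%:C) *m spectralmx X.

Definition lambda_max (R : realType) n (X : 'M[R[i]]_n.+1) : R :=
  \big[Num.max/eigval X ord0]_(j < n.+1) eigval X j.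

Definition lambda_min (R : realType) n (X : 'M[R[i]]_n.+1) : R :=
  \big[Num.min/eigval X ord0]_(j < n.+1) eigval X j.

Definition operator_convex (R : realType) (f : R -> R) : Prop :=
  forall (m : nat) (X Y : 'M[R[i]]_m), pdmx X -> pdmx Y ->
  forall t : R, 0 <= t <= 1 ->
    loewner_le (mxfun f (t%:C *: X + (1 - t)%:C *: Y))
               (t%:C *: mxfun f X + (1 - t)%:C *: mxfun f Y).

Definition convex_on_pd (R : realType) n (h : 'M[R[i]]_n -> R) : Prop :=
  forall X Y : 'M[R[i]]_n, pdmx X -> pdmx Y ->
  forall t : R, 0 <= t <= 1 ->
    h (t%:C *: X + (1 - t)%:C *: Y) <= t * h X + (1 - t) * h Y.

Definition rel_smooth_pd (R : realType) n (L : R) (g phi : 'M[R[i]]_n -> R) :=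
  convex_on_pd (fun X => L * phi X - g X).

Definition rel_strongly_convex_pd (R : realType) n (mu : R)
  (g phi : 'M[R[i]]_n -> R) :=
  convex_on_pd (fun X => g X - mu * phi X).

(* real trace (the traces below are real numbers) *)
Definition retr (R : realType) n (M : 'M[R[i]]_n) : R := complex.Re (\tr M).

(* Main.v *)
Require Import Defs.
From HB Require Import structures.
From mathcomp Require Import all_boot all_order all_algebra.
From mathcomp Require Import sesquilinear spectral.
From mathcomp Require Import reals.
From mathcomp.real_closed Require Import complex.
From mathcomp Require Import lra.
Import Order.TTheory GRing.Theory Num.Theory.
Local Open Scope ring_scope.
Local Open Scope complex_scope.

Section Aux.
Variable R : realType.

Lemma ReD (x y : R[i]) : complex.Re (x + y) = complex.Re x + complex.Re y.
Proof. by case: x; case: y. Qed.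

Lemma ReN (x : R[i]) : complex.Re (- x) = - complex.Re x.
Proof. by case: x. Qed.

Lemma ReM (k : R) (x : R[i]) : complex.Re (k%:C * x) = k * complex.Re x.
Proof. case: x => a b /=; by rewrite mul0r subr0. Qed.

Lemma Re_ge0 (x : R[i]) : 0 <= x -> 0 <= complex.Re x.
Proof. by rewrite lecE => /andP[]. Qed.

Lemma real_Re (x : R[i]) : x \is Num.real -> x = (complex.Re x)%:C.
Proof.
rewrite realE !lecE => /orP[] /andP[/eqP h _]; case: x h => a b /= h.
  by subst b.
by subst b.
Qed.

Lemma retrD n (M N : 'M[R[i]]_n) : retr (M + N) = retr M + retr N.
Proof. by rewrite /retr mxtraceD ReD. Qed.
Lemma retrN n (M : 'M[R[i]]_n) : retr (- M) = - retr M.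
Proof. by rewrite /retr raddfN ReN. Qed.
Lemma retrZ n (k : R) (M : 'M[R[i]]_n) : retr (k%:C *: M) = k * retr M.
Proof. by rewrite /retr mxtraceZ ReM. Qed.


Lemma entry_quad n (U M : 'M[R[i]]_n) j :
  (U *m M *m ctr U) j j = (row j U *m M *m ctr (row j U)) 0 0.
Proof.
rewrite !mxE; apply: eq_bigr => k _; rewrite !mxE; congr (_ * _).
  by apply: eq_bigr => l _; rewrite !mxE.
Qed.

Lemma tr_psd n (U : 'M[R[i]]_n) (e : 'rV[R[i]]_n) (M : 'M_n) :
  (forall j, 0 <= e 0 j) -> psdmx M ->
  0 <= \tr (ctr U *m diag_mx e *m U *m M).
Proof.
move=> he [_ hM].
rewrite -!mulmxA mxtrace_mulC -!mulmxA mul_diag_mx /mxtrace.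
apply: sumr_ge0 => j _; rewrite mxE; apply: mulr_ge0; first exact: he.
rewrite mulmxA entry_quad; exact: hM.
Qed.


Lemma herm_decomp n (A : 'M[R[i]]_n) : Defs.hermitian A ->
  A = ctr (spectralmx A) *m diag_mx (\row_j (eigval A j)%:C) *m spectralmx A.
Proof.
move=> hA.
have hr := hermitian_spectral_diag_real hA.
have /orthomx_spectralP hE := hermitian_normalmx hA.
rewrite {1}hE invmx_unitary; last exact: spectral_unitarymx.
congr (_ *m diag_mx _ *m _); apply/matrixP => i j; rewrite ord1 mxE /eigval.
apply: real_Re; exact: (mxOverP hr).
Qed.

Lemma ctrU_U n (A : 'M[R[i]]_n) : ctr (spectralmx A) *m spectralmx A = 1%:M.
Proof.
have := mulVmx (spectral_unit A).
rewrite invmx_unitary; last exact: spectral_unitarymx.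
by [].
Qed.

Lemma scalar_decomp n (A : 'M[R[i]]_n) (c : R[i]) :
  c%:M = ctr (spectralmx A) *m diag_mx (\row_(j < n) c) *m spectralmx A.
Proof.
have -> : (\row_(j < n) c) = const_mx c by apply/matrixP => i j; rewrite !mxE.
by rewrite diag_const_mx mul_mx_scalar -scalemxAl ctrU_U scalemx1.
Qed.

Lemma diag_sub n (a b : 'rV[R[i]]_n) : diag_mx (a - b) = diag_mx a - diag_mx b.
Proof. by apply/matrixP => i j; rewrite !mxE mulrnBl. Qed.


Lemma big_max_ge (I : eqType) (s : seq I) (F : I -> R) (x0 : R) j :
  j \in s -> F j <= \big[Num.max/x0]_(i <- s) F i.
Proof.
elim: s => // a s IH; rewrite inE big_cons => /orP[/eqP->|/IH h].
  by rewrite le_max lexx.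
by rewrite le_max h orbT.
Qed.

Lemma big_min_le (I : eqType) (s : seq I) (F : I -> R) (x0 : R) j :
  j \in s -> \big[Num.min/x0]_(i <- s) F i <= F j.
Proof.
elim: s => // a s IH; rewrite inE big_cons => /orP[/eqP->|/IH h].
  by rewrite ge_min lexx.
by rewrite ge_min h orbT.
Qed.

Lemma convex_ext n (h1 h2 : 'M[R[i]]_n -> R) :
  (forall X, h1 X = h2 X) -> convex_on_pd h1 -> convex_on_pd h2.
Proof. by move=> e hc X Y hX hY t ht; rewrite -!e; exact: hc. Qed.

Lemma retr_lin n (B P Q Z : 'M[R[i]]_n) (t : R) :
  retr (B *m (t%:C *: P + (1 - t)%:C *: Q - Z)) =
  t * retr (B *m P) + (1 - t) * retr (B *m Q) - retr (B *m Z).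
Proof.
rewrite mulmxBr mulmxDr !retrD retrN -!scalemxAr !retrZ //.
Qed.

Lemma conv_gen (f : R -> R) (hf : operator_convex f) n (B : 'M[R[i]]_n) :
  (forall M, psdmx M -> 0 <= retr (B *m M)) ->
  convex_on_pd (fun X => retr (B *m mxfun f X)).
Proof.
move=> hB X Y hX hY t ht.
have := hB _ (hf _ _ _ hX hY t ht).
rewrite retr_lin.
by rewrite subr_ge0.
Qed.


Lemma smooth_eq n (L : R) (A M : 'M[R[i]]_n) :
  L * retr M - retr (A *m M) = retr ((L%:C%:M - A) *m M).
Proof. by rewrite mulmxBl retrD retrN mul_scalar_mx retrZ. Qed.

Lemma strong_eq n (L : R) (A M : 'M[R[i]]_n) :
  retr (A *m M) - L * retr M = retr ((A - L%:C%:M) *m M).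
Proof. by rewrite mulmxBl retrD retrN mul_scalar_mx retrZ. Qed.

Lemma smooth_psd n (A : 'M[R[i]]_n) (L : R) M : Defs.hermitian A ->
  (forall j, eigval A j <= L) -> psdmx M -> 0 <= retr ((L%:C%:M - A) *m M).
Proof.
move=> hA hL hM.
have h1 := @herm_decomp n A hA.
have h2 := @scalar_decomp n A (L%:C).
have E : L%:C%:M - A = ctr (spectralmx A) *m
   (diag_mx (\row_(j < n) L%:C) - diag_mx (\row_j (eigval A j)%:C)) *m spectralmx A.
  by rewrite mulmxBr mulmxBl -h2 -h1.
rewrite E -diag_sub; apply: Re_ge0; apply: tr_psd => // j.
by rewrite !mxE subr_ge0 lecR.
Qed.

Lemma strong_psd n (A : 'M[R[i]]_n) (L : R) M : Defs.hermitian A ->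
  (forall j, L <= eigval A j) -> psdmx M -> 0 <= retr ((A - L%:C%:M) *m M).
Proof.
move=> hA hL hM.
have h1 := @herm_decomp n A hA.
have h2 := @scalar_decomp n A (L%:C).
have E : A - L%:C%:M = ctr (spectralmx A) *m
   (diag_mx (\row_j (eigval A j)%:C) - diag_mx (\row_(j < n) L%:C)) *m spectralmx A.
  by rewrite mulmxBr mulmxBl -h2 -h1.
rewrite E -diag_sub; apply: Re_ge0; apply: tr_psd => // j.
by rewrite !mxE subr_ge0 lecR.
Qed.

End Aux.

Theorem mainTheorem9 (R : realType) (f : R -> R) (hf : operator_convex f)
  (n : nat) (A : 'M[R[i]]_n.+1) (hA : psdmx A) :
  rel_smooth_pd (lambda_max A) (fun X => retr (A *m mxfun f X))
                (fun X => retr (mxfun f X)) /\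
  rel_strongly_convex_pd (lambda_min A) (fun X => retr (A *m mxfun f X))
                (fun X => retr (mxfun f X)).
Proof.
split.
- apply: (@convex_ext _ _ (fun X => retr (((lambda_max A)%:C%:M - A) *m mxfun f X))).
    by move=> X; rewrite smooth_eq.
  apply: conv_gen => // M hM.
  apply: smooth_psd => //; first exact: hA.1.
  move=> j; rewrite /lambda_max.
  by apply: big_max_ge; rewrite mem_index_enum.
- apply: (@convex_ext _ _ (fun X => retr ((A - (lambda_min A)%:C%:M) *m mxfun f X))).
    by move=> X; rewrite strong_eq.
  apply: conv_gen => // M hM.
  apply: strong_psd => //; first exact: hA.1.
  move=> j; rewrite /lambda_min.
  by apply: big_min_le; rewrite mem_index_enum.
Qed.
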